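(* Let $\mathcal A$ be a GRA over $(\mathbb N;=)$ and $\mathcal B$ a one-register GURA over $(\mathbb N;=)$ over the same alphabet. Let $S=(\ell^{\mathcal A}(\mathbf d),C)$ be a synchronized configuration such that $C$ is essentially coverable, and let $a\ne b$ with $a,b\in\mathrm{supp}(C)$ and $a\equiv_S b$. Then $S$ reaches a bad synchronized configuration in $(\mathcal S,\Rightarrow)$ if and only if $S'=(\ell^{\mathcal A}(\mathbf d),(C\setminus C_b^+)\cup C_b^-)$ reaches a bad synchronized configuration in $(\mathcal S,\Rightarrow)$.
   Context: A GRA over $(\mathbb N;=)$ and finite alphabet $\Sigma$ is $(\mathcal R,\mathcal L,\ell_{init},\mathcal L_{acc},E)$ with finite registers $\mathcal R$, locations, initial location, accepting locations, and finite edges $(\ell,\sigma,\phi,\ell')$ where $\phi$ is a Boolean combination of equalities $t_1=t_2$, $t_i\in\{\#\}\cup\{r,\dot r:r\in\mathcal R\}$, interpreted on $(\mathbf u,d,\mathbf v)$ (current valuation in $\mathbb N_\bot^{\mathcal R}$ with $\mathbb N_\bot=\mathbb N\cup\{\bot\}$, input datum, next valuation); next register values not fixed by $\phi$ may be guessed subject to $\phi$. States are $\ell(\mathbf u)$; the initial state has all registers $\bot$; $\ell(\mathbf u)\xrightarrow{\sigma,d}\ell'(\mathbf u')$ if some edge $(\ell,\sigma,\phi,\ell')$ has $(\mathbf u,d,\mathbf u')\models\phi$. A GURA is a GRA in which each data word has at most one run from the initial state ending in an accepting location. For $\mathcal B$ (one register): a configuration is a (possibly infinite) set of states $\ell(u)$,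 $u\in\mathbb N_\bot$; $\mathrm{succ}(C,(\sigma,d))$ is the set of states reached by one $(\sigma,d)$-transition from states of $C$, extended to words; $C$ is accepting if it contains a state with accepting location; reachable if $C=\mathrm{succ}(\{\ell_{init}(\bot)\},w)$ for some data word $w$; coverable if contained in a reachable configuration; essentially coverable if every subset of at most two of its states is coverable. $\mathrm{supp}(C)$ is the set of $d\in\mathbb N$ such that either $\ell(d)\in C$ for some $\ell$ with $\{e:\ell(e)\in C\}$ finite, or $\ell(d)\notin C$ for some $\ell$ with $\{e:\ell(e)\in C\}$ cofinite. $C_d^+=\{\ell(d):\ell(d)\in C,\ \{e\in\mathbb N:\ell(e)\in C\}\text{ finite}\}$, $C_d^-=\{\ell(d):\ell(d)\notin C,\ \{e\in\mathbb N:\ell(e)\in C\}\text{ infinite}\}$. A synchronized configuration is a pair $(\ell(\mathbf d),C)$ of a state of $\mathcal A$ and a configuration of $\mathcal B$; $\mathcal S$ is their set; $(\ell(\mathbf d),C)\Rightarrow(\ell'(\mathbf d'),C')$ iff for some $(\sigma,d)$, $\ell(\mathbf d)\xrightarrow{\sigma,d}_{\mathcal A}\ell'(\mathbf d')$ and $\mathrm{succ}_{\mathcal B}(C,(\sigma,d))=C'$; ''reaches'' means via a finite $\Rightarrow$-path. $(\ell(\mathbf d),C)$ is bad if $\ell\in\mathcal L^{\mathcal A}_{acc}$ and $C$ is non-accepting. For $S=(\ell(\mathbf d),C)$ and $a,b\in\mathrm{supp}(C)$, $a\equiv_S b$ (indistinguishable) means $a,b$ do not occur in $\mathbf d$ and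 $\{\ell:\ell(a)\in C\}=\{\ell:\ell(b)\in C\}$. *)

(* Defs.v *)
From Stdlib Require List.
From mathcomp Require Import all_boot.
Set Implicit Arguments. Unset Strict Implicit. Unset Printing Implicit Defensive.

(* Data domain N_bot = option nat (None = bot). *)

(* Terms of guard formulas: #, r (current value), r-dot (next value). *)
Inductive term (R : Type) : Type :=
| THash : term R
| TCur : R -> term R
| TNext : R -> term R.

Inductive form (R : Type) : Type :=
| FEq : term R -> term R -> form R
| FTrue : form R
| FNot : form R -> form R
| FAnd : form R -> form R -> form R
| FOr : form R -> form R -> form R.

Definition term_val (R : Type) (u : R -> option nat) (d : nat) (v : R -> option nat)
  (t : term R) : option nat :=
  match t with
  | THash => Some d
  | TCur r => u r
  | TNext r => v r
  end.

Fixpoint sat (R : Type) (u : R -> option nat) (d : nat) (v : R -> option nat)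
  (phi : form R) : Prop :=
  match phi with
  | FEq t1 t2 => term_val u d v t1 = term_val u d v t2
  | FTrue => True
  | FNot f => ~ sat u d v f
  | FAnd f g => sat u d v f /\ sat u d v g
  | FOr f g => sat u d v f \/ sat u d v g
  end.

Record GRA (Sigma : finType) := mkGRA {
  regs : finType;
  locs : finType;
  l_init : locs;
  l_acc : pred locs;
  edges : seq (locs * Sigma * form regs * locs)
}.

Arguments regs {Sigma} g.
Arguments locs {Sigma} g.
Arguments l_init {Sigma} g.
Arguments l_acc {Sigma} g _.
Arguments edges {Sigma} g.

Definition state (Sigma : finType) (A : GRA Sigma) : Type :=
  (locs A * (regs A -> option nat))%type.

Definition init_state (Sigma : finType) (A : GRA Sigma) : state A :=
  (l_init A, fun _ => None).
Arguments init_state {Sigma} A.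

Definition step (Sigma : finType) (A : GRA Sigma) (s : state A) (a : Sigma * nat)
  (s' : state A) : Prop :=
  exists l1 sg phi l2, List.In (l1, sg, phi, l2) (edges A) /\
    l1 = s.1 /\ sg = a.1 /\ l2 = s'.1 /\ sat s.2 a.2 s'.2 phi.

Fixpoint run_from (Sigma : finType) (A : GRA Sigma) (s : state A)
  (w : seq (Sigma * nat)) (ss : seq (state A)) : Prop :=
  match w, ss with
  | [::], [::] => True
  | a :: w', s' :: ss' => step s a s' /\ run_from s' w' ss'
  | _, _ => False
  end.

Definition unambiguous (Sigma : finType) (A : GRA Sigma) : Prop :=
  forall (w : seq (Sigma * nat)) (ss1 ss2 : seq (state A)),
    run_from (init_state A) w ss1 -> l_acc A (last (init_state A) ss1).1 ->
    run_from (init_state A) w ss2 -> l_acc A (last (init_state A) ss2).1 ->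
    ss1 = ss2.

Definition one_register (Sigma : finType) (B : GRA Sigma) : Prop := #|regs B| = 1.

Definition val1 (Sigma : finType) (B : GRA Sigma) (u : option nat) : regs B -> option nat :=
  fun _ => u.
Arguments val1 {Sigma} B u _.

Definition config (Sigma : finType) (B : GRA Sigma) : Type := locs B * option nat -> Prop.

Definition succ (Sigma : finType) (B : GRA Sigma) (C : config B) (a : Sigma * nat) : config B :=
  fun s' => exists s, C s /\ step (s.1, val1 B s.2) a (s'.1, val1 B s'.2).

Fixpoint succw (Sigma : finType) (B : GRA Sigma) (C : config B) (w : seq (Sigma * nat))
  : config B :=
  match w with
  | [::] => C
  | a :: w' => succw (succ C a) w'
  end.

Definition init_config (Sigma : finType) (B : GRA Sigma) : config B :=
  fun s => s = (l_init B, None).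
Arguments init_config {Sigma} B _.

Definition accepting (Sigma : finType) (B : GRA Sigma) (C : config B) : Prop :=
  exists s, C s /\ l_acc B s.1.

Definition reachable (Sigma : finType) (B : GRA Sigma) (C : config B) : Prop :=
  exists w, forall s, C s <-> succw (init_config B) w s.

Definition coverable (Sigma : finType) (B : GRA Sigma) (C : config B) : Prop :=
  exists C', reachable C' /\ forall s, C s -> C' s.

Definition ess_coverable (Sigma : finType) (B : GRA Sigma) (C : config B) : Prop :=
  coverable (fun _ : locs B * option nat => False) /\
  forall s1 s2, C s1 -> C s2 -> coverable (fun s => s = s1 \/ s = s2).

Definition finite_nat (P : nat -> Prop) : Prop := exists n, forall e, P e -> e < n.
Definition cofinite_nat (P : nat -> Prop) : Prop := exists n, forall e, n <= e -> P e.

Definition supp (Sigma : finType) (B : GRA Sigma) (C : config B) (d : nat) : Prop :=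
  exists l : locs B,
    (C (l, Some d) /\ finite_nat (fun e => C (l, Some e))) \/
    (~ C (l, Some d) /\ cofinite_nat (fun e => C (l, Some e))).

Definition Cplus (Sigma : finType) (B : GRA Sigma) (C : config B) (d : nat) : config B :=
  fun s => exists l, s = (l, Some d) /\ C (l, Some d) /\ finite_nat (fun e => C (l, Some e)).

Definition Cminus (Sigma : finType) (B : GRA Sigma) (C : config B) (d : nat) : config B :=
  fun s => exists l, s = (l, Some d) /\ ~ C (l, Some d) /\ ~ finite_nat (fun e => C (l, Some e)).

Definition sconf (Sigma : finType) (A B : GRA Sigma) : Type := (state A * config B)%type.

Definition sstep (Sigma : finType) (A B : GRA Sigma) (S S' : sconf A B) : Prop :=
  exists a : Sigma * nat, step S.1 a S'.1 /\ forall s, S'.2 s <-> succ S.2 a s.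

Inductive sreaches (Sigma : finType) (A B : GRA Sigma) : sconf A B -> sconf A B -> Prop :=
| sreach_refl S : sreaches S S
| sreach_step S S' S'' : sstep S S' -> sreaches S' S'' -> sreaches S S''.

Definition bad (Sigma : finType) (A B : GRA Sigma) (S : sconf A B) : Prop :=
  l_acc A S.1.1 /\ ~ accepting S.2.

Definition reaches_bad (Sigma : finType) (A B : GRA Sigma) (S : sconf A B) : Prop :=
  exists S', sreaches S S' /\ bad S'.

Definition indist (Sigma : finType) (A B : GRA Sigma) (S : sconf A B) (a b : nat) : Prop :=
  (forall r, S.1.2 r <> Some a) /\ (forall r, S.1.2 r <> Some b) /\
  (forall l : locs B, S.2 (l, Some a) <-> S.2 (l, Some b)).

(* Main.v *)
Require Import Defs.
From mathcomp Require Import all_boot zify.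
From Stdlib Require Import Classical FunctionalExtensionality.
Set Implicit Arguments. Unset Strict Implicit. Unset Printing Implicit Defensive.

Definition sw (x y n : nat) : nat := if n == x then y else if n == y then x else n.

Lemma sw_l x y : sw x y x = y. Proof. by rewrite /sw eqxx. Qed.
Lemma sw_r x y : sw x y y = x. Proof. rewrite /sw; case: eqP => [->|_]; by rewrite ?eqxx. Qed.
Lemma sw_id x y z : z <> x -> z <> y -> sw x y z = z.
Proof. move=> h1 h2; rewrite /sw; case: eqP => // _; by case: eqP. Qed.
Lemma swK x y : involutive (sw x y).
Proof.
move=> n; case: (eqVneq n x) => [->|hx]; first by rewrite sw_l sw_r.
case: (eqVneq n y) => [->|hy]; first by rewrite sw_r sw_l.
by rewrite !sw_id //; apply/eqP.
Qed.
Lemma oswK x y : involutive (omap (sw x y)).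
Proof. by case=> //= n; rewrite swK. Qed.

Lemma in_fold x s : x \in s -> x <= foldr maxn 0 s.
Proof.
elim: s => //= z s IH; rewrite in_cons => /orP [/eqP ->|/IH h]; first exact: leq_maxl.
exact: leq_trans h (leq_maxr _ _).
Qed.

Lemma nfin_big (P : nat -> Prop) : ~ finite_nat P -> forall n, exists e, n <= e /\ P e.
Proof.
move=> h n; apply: NNPP => hn; apply: h; exists n => e pe.
rewrite ltnNge; apply/negP => ne; apply: hn; by exists e.
Qed.

Lemma fin_bound (T : finType) (Q : T -> nat -> Prop) :
  (forall t m n, m <= n -> Q t m -> Q t n) -> (forall t, exists n, Q t n) ->
  exists N, forall t, Q t N.
Proof.
move=> mono ex.
suff: forall s : seq T, exists N, forall t, t \in s -> Q t N.
  case/(_ (enum T)) => N h; exists N => t; apply: h; by rewrite mem_enum.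
elim=> [|t s [N IH]]; first by exists 0.
have [n hn] := ex t. exists (maxn n N) => t'; rewrite in_cons => /orP [/eqP->|/IH h].
  exact: mono (leq_maxl _ _) hn.
exact: mono (leq_maxr _ _) h.
Qed.

Section Sw.
Variables (Sigma : finType) (G : GRA Sigma).

Lemma tv_sw x y (u : regs G -> option nat) d v t :
  term_val (fun r => omap (sw x y) (u r)) (sw x y d) (fun r => omap (sw x y) (v r)) t
  = omap (sw x y) (term_val u d v t).
Proof. by case: t. Qed.

Lemma sat_sw x y (u : regs G -> option nat) d v phi :
  sat u d v phi <-> sat (fun r => omap (sw x y) (u r)) (sw x y d) (fun r => omap (sw x y) (v r)) phi.
Proof.
elim: phi => /=.
- move=> t1 t2; rewrite !tv_sw; split => [->//|]; exact: (can_inj (oswK x y)).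
- tauto.
- move=> f [h1 h2]; split=> hn hs; apply: hn; auto.
- move=> f [h1 h2] g [h3 h4]; tauto.
- move=> f [h1 h2] g [h3 h4]; tauto.
Qed.

Definition swS x y (s : state G) : state G := (s.1, fun r => omap (sw x y) (s.2 r)).
Definition swa x y (a : Sigma * nat) := (a.1, sw x y a.2).
Definition swW x y (w : seq (Sigma * nat)) := map (swa x y) w.

Lemma step_sw x y (s s' : state G) a : step s a s' -> step (swS x y s) (swa x y a) (swS x y s').
Proof.
case=> l1 [sg [phi [l2 [Hin [e1 [e2 [e3 Hs]]]]]]].
exists l1, sg, phi, l2; split; first exact: Hin.
split; first exact: e1. split; first by rewrite e2. split; first exact: e3.
exact: (proj1 (sat_sw x y _ _ _ _) Hs).
Qed.

Lemma run_sw x y s w ss : run_from s w ss ->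
  run_from (swS x y s) (swW x y w) (map (swS x y) ss).
Proof.
elim: w s ss => [|a w IH] s [|s' ss] //= [h1 h2]; split; [exact: step_sw | exact: IH].
Qed.

Lemma swWK x y : involutive (swW x y).
Proof. elim=> //= [[s n] w IH]; by rewrite IH /swa /= swK. Qed.

Lemma swW_id x y w : x \notin [seq p.2 | p <- w] -> y \notin [seq p.2 | p <- w] -> swW x y w = w.
Proof.
elim: w => //= [[s n] w IH]; rewrite !in_cons !negb_or => /andP[hx1 hx2] /andP[hy1 hy2].
rewrite IH // /swa /= sw_id //; apply/eqP; by rewrite eq_sym.
Qed.

End Sw.
Section BB.
Variables (Sigma : finType) (B : GRA Sigma).

Definition bst := (locs B * option nat)%type.
Definition bstep (s : bst) a (s' : bst) := step (s.1, Defs.val1 B s.2) a (s'.1, Defs.val1 B s'.2).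
Fixpoint brun (s : bst) (w : seq (Sigma * nat)) (ss : seq bst) : Prop :=
  match w, ss with
  | [::], [::] => True
  | a :: w', s' :: ss' => bstep s a s' /\ brun s' w' ss'
  | _, _ => False
  end.
Definition acc (s : bst) w := exists ss, brun s w ss /\ l_acc B (last s ss).1.
Definition swB x y (s : bst) : bst := (s.1, omap (sw x y) s.2).

Lemma bstep_sw x y s a s' : bstep s a s' -> bstep (swB x y s) (swa x y a) (swB x y s').
Proof. move=> h; exact: (step_sw x y h). Qed.

Lemma acc_sw x y s w : acc s w -> acc (swB x y s) (swW x y w).
Proof.
case=> ss [hr hl]; exists (map (swB x y) ss); split; last by rewrite last_map.
elim: w s ss hr {hl} => [|a w IH] s [|s' ss] //= [h1 h2]; split; [exact: bstep_sw | exact: IH].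
Qed.

Lemma swBK x y : involutive (swB x y).
Proof. by case=> l o; rewrite /swB /= oswK. Qed.

Lemma succw_char (C : config B) w s' :
  succw C w s' <-> exists s0 ss, C s0 /\ brun s0 w ss /\ last s0 ss = s'.
Proof.
elim: w C s' => [|a w IH] C s' /=.
  split; first by move=> h; exists s', nil.
  case=> s0 [ss [h [hr <-]]]; by case: ss hr.
rewrite IH; split.
  case=> s1 [ss [[s0 [h0 hst]] [hr hl]]]; by exists s0, (s1 :: ss).
case=> s0 [[|s1 ss] [h0 [//= [hst hr] hl]]].
exists s1, ss; split => //; by exists s0.
Qed.

Lemma succw_ext (C1 C2 : config B) w : (forall s, C1 s <-> C2 s) -> forall s, succw C1 w s <-> succw C2 w s.
Proof.
move=> h s; rewrite !succw_char; split; case=> s0 [ss [h0 h1]]; exists s0, ss; split=> //; by apply/h.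
Qed.

Lemma brun_cat s u w ss1 ss2 : brun s u ss1 -> brun (last s ss1) w ss2 -> brun s (u ++ w) (ss1 ++ ss2).
Proof.
elim: u s ss1 => [|a u IH] s [|s1 ss1] //= [h1 h2] h3; split=> //; exact: IH.
Qed.

Definition toA (s : bst) : state B := (s.1, Defs.val1 B s.2).

Lemma brun_run s w ss : brun s w ss -> run_from (toA s) w (map toA ss).
Proof. elim: w s ss => [|a w IH] s [|s1 ss] //= [h1 h2]; split => //; exact: IH. Qed.

Lemma brun_size s w ss : brun s w ss -> size ss = size w.
Proof. elim: w s ss => [|a w IH] s [|s1 ss] //= [h1 h2]; by rewrite (IH _ _ h2). Qed.

Lemma disj (hB1 : one_register B) (hB : unambiguous B) C s1 s2 w :
  ess_coverable C -> C s1 -> C s2 -> s1 <> s2 -> acc s1 w -> acc s2 w -> False.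
Proof.
case=> _ hc h1 h2 hne [t1 [hr1 hl1]] [t2 [hr2 hl2]].
have [C'' [[u hu] hsub]] := hc s1 s2 h1 h2.
have := proj1 (hu s1) (hsub s1 (or_introl erefl)).
have := proj1 (hu s2) (hsub s2 (or_intror erefl)).
rewrite !succw_char => -[q2 [ss2 [e2 [r2 l2]]]] [q1 [ss1 [e1 [r1 l1]]]].
rewrite /init_config in e1 e2; subst q1 q2.
have R1 := brun_run (brun_cat r1 (eq_ind_r (fun z => brun z w t1) hr1 l1)).
have R2 := brun_run (brun_cat r2 (eq_ind_r (fun z => brun z w t2) hr2 l2)).
have E' : map toA (ss1 ++ t1) = map toA (ss2 ++ t2).
  apply: (hB (u ++ w)); [exact: R1| |exact: R2|].
  - change (l_acc B (last (toA (l_init B, None)) (map toA (ss1++t1))).1).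
    by rewrite last_map last_cat l1.
  - change (l_acc B (last (toA (l_init B, None)) (map toA (ss2++t2))).1).
    by rewrite last_map last_cat l2.
have : take (size u) (map toA (ss1 ++ t1)) = take (size u) (map toA (ss2 ++ t2)) by rewrite E'.
rewrite !map_cat !take_size_cat ?size_map ?(brun_size r1) ?(brun_size r2) // => e.
have : last (toA (l_init B, None)) (map toA ss1) = last (toA (l_init B, None)) (map toA ss2) by rewrite e.
rewrite !last_map l1 l2 /toA => -[ea eb].
have : 0 < #|regs B| by rewrite hB1.
case/card_gt0P => r _.
apply: hne; move: s1 s2 ea eb {h1 h2 hr1 hl1 hr2 hl2 r1 r2 l1 l2 R1 R2 E' e hsub hu hc}=> [x1 y1] [x2 y2] /= -> eb.
have e2 : y1 = y2 := congr1 (fun f => f r) eb. by rewrite e2.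
Qed.

End BB.
Section RB.
Variables (Sigma : finType) (A B : GRA Sigma).

Definition Apart (s : state A) w := exists ss, run_from s w ss /\ l_acc A (last s ss).1.
Definition badw (s : state A) (C : config B) w := Apart s w /\ forall s0, C s0 -> ~ acc s0 w.

Lemma sreach_inv (S S' : sconf A B) : sreaches S S' ->
  exists w ss, run_from S.1 w ss /\ last S.1 ss = S'.1 /\ forall s, S'.2 s <-> succw S.2 w s.
Proof.
elim=> [S0|S0 S1 S2 [a [hst hc]] _ [w [ss [hr [hl hi]]]]].
  by exists nil, nil.
exists (a :: w), (S1.1 :: ss); split; first by split.
split => // s; rewrite hi /=; exact: succw_ext.
Qed.

Lemma sreach_build (s : state A) (C : config B) w ss : run_from s w ss ->
  sreaches (s, C) (last s ss, succw C w).
Proof.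
elim: w s C ss => [|a w IH] s C [|s' ss] //=; first by move=> _; apply: sreach_refl.
case=> h1 h2; apply: sreach_step (IH s' (succ C a) ss h2).
by exists a.
Qed.

Lemma rb_char (s : state A) (C : config B) : reaches_bad (s, C) <-> exists w, badw s C w.
Proof.
split.
  case=> S' [hr [hb hna]]; have [w [ss [r [l hi]]]] := sreach_inv hr.
  exists w; split; first by exists ss; rewrite l.
  move=> s0 h0 [t [ht hl]]; apply: hna; exists (last s0 t); split=> //.
  apply/hi/succw_char; by exists s0, t.
case=> w [[ss [hr hl]] hc]; exists (last s ss, succw C w); split; first exact: sreach_build.
split => //= -[s' [hs' ha]].
have [s0 [t [h0 [ht hl']]]] := proj1 (succw_char _ _ _) hs'.
apply: (hc s0 h0); exists t; by rewrite hl'.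
Qed.

Lemma dswap x y (d : regs A -> option nat) :
  (forall r, d r <> Some x) -> (forall r, d r <> Some y) -> (fun r => omap (sw x y) (d r)) = d.
Proof.
move=> hx hy; apply: functional_extensionality => r.
case e: (d r) => [n|] //=; rewrite sw_id // => en; subst; [exact: hx e|exact: hy e].
Qed.

Lemma Apart_sw x y (s : state A) w : (forall r, s.2 r <> Some x) -> (forall r, s.2 r <> Some y) ->
  Apart s w -> Apart s (swW x y w).
Proof.
case: s => l d /= hx hy [ss [hr hl]]; exists (map (swS x y) ss).
have e : swS x y (l, d) = (l, d) by rewrite /swS /= dswap.
split; first by rewrite -{1}e; exact: run_sw.
by rewrite -{1}e last_map.
Qed.

End RB.
Section Main.
Variables (Sigma : finType) (A B : GRA Sigma).
Hypotheses (hB1 : one_register B) (hB : unambiguous B).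

Notation vals w := [seq p.2 | p <- w].

Lemma acc_gen (lb : locs B) x y w : x \notin vals w -> y \notin vals w ->
  acc (lb, Some x) w -> acc (lb, Some y) w.
Proof.
move=> hx hy h; have := acc_sw x y h; rewrite swW_id // /swB /= sw_l //.
Qed.

Lemma use2 (C : config B) lb a b f w : ess_coverable C -> a <> b ->
  C (lb, Some a) -> C (lb, Some b) -> f \notin vals w -> acc (lb, Some f) w -> False.
Proof.
move=> hC ab ha hb hf hacc.
set M := foldr maxn 0 (a :: b :: vals w).
have hM : forall z, M < z -> z \notin vals w.
  move=> z hz; apply/negP => hin.
  have := in_fold (x := z) (s := a :: b :: vals w); rewrite !in_cons hin !orbT => /(_ isT).
  rewrite -/M; lia.
have aM : a <= M by apply: in_fold; rewrite in_cons eqxx.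
have bM : b <= M by apply: in_fold; rewrite !in_cons eqxx orbT.
have h1 := acc_gen (hf) (hM M.+1 (ltnSn _)) hacc.
have h2 := acc_gen (hf) (hM M.+2 (ltnW (ltnSn _))) hacc.
have k1 := acc_sw a M.+1 h1. have k2 := acc_sw a M.+1 h2.
rewrite /swB /= sw_r in k1. rewrite /swB /= sw_id in k2; try lia.
have j1 := acc_sw b M.+2 k1. have j2 := acc_sw b M.+2 k2.
rewrite /swB /= sw_id in j1; try lia. rewrite /swB /= sw_r in j2.
apply: (disj hB1 hB hC ha hb _ j1 j2) => -[]; exact: ab.
Qed.
End Main.
Section Main2.
Variables (Sigma : finType) (A B : GRA Sigma).
Hypotheses (hB1 : one_register B) (hB : unambiguous B).
Variables (l : locs A) (d : regs A -> option nat) (C : config B) (a b : nat).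
Hypotheses (hC : ess_coverable C) (ab : a <> b) (ind : indist ((l, d), C) a b).

Notation vals w := [seq p.2 | p <- w].
Definition C' : config B := fun s => (C s /\ ~ Cplus C b s) \/ Cminus C b s.

Lemma C_swap s : C s -> C (swB a b s).
Proof.
case: s => lb [x|] h; rewrite /swB /=; last done.
case: (eqVneq x a) => [ea|xa]; first by subst x; rewrite sw_l; exact: (proj1 (ind.2.2 lb) h).
case: (eqVneq x b) => [eb|xb]; first by subst x; rewrite sw_r; exact: (proj2 (ind.2.2 lb) h).
by rewrite sw_id //; apply/eqP.
Qed.

Lemma dir1 w : badw (l, d) C w -> exists w', badw (l, d) C' w'.
Proof.
move=> [hA hCw].
have hw2 : badw (l, d) C (swW a b w).
  split; first by apply: Apart_sw => //; [exact: ind.1 | exact: ind.2.1].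
  move=> s0 hs0 hacc; apply: (hCw (swB a b s0)); first exact: C_swap.
  by have := acc_sw a b hacc; rewrite swWK.
case: (classic (badw (l, d) C' w)) => [h|h1]; first by exists w.
case: (classic (badw (l, d) C' (swW a b w))) => [h|h2]; first by eexists; exact: h.
exfalso.
have [s1 [hs1 acc1]] : exists s, C' s /\ acc s w.
  apply: NNPP => hn; apply: h1; split => // s hs hacc; apply: hn; by exists s.
have [s2 [hs2 acc2]] : exists s, C' s /\ acc s (swW a b w).
  apply: NNPP => hn; apply: h2; split => //; first exact: hw2.1.
  move=> s hs hacc; apply: hn; by exists s.
case: hs1 => [[hs1 _]|[l1 [e1 [_ hinf1]]]]; first exact: (hCw s1).
case: hs2 => [[hs2 _]|[l2 [e2 [_ hinf2]]]]; first exact: (hw2.2 s2).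
subst s1 s2.
have := acc_sw a b acc2; rewrite swWK /swB /= sw_r => acc2'.
have [c [hc Cc]] := nfin_big hinf1 (a + b).+1.
have [c' [hc' Cc']] := nfin_big hinf2 c.+1.
have k1 := acc_sw b c acc1. have k2 := acc_sw b c acc2'.
rewrite /swB /= sw_l in k1. rewrite /swB /= sw_id in k2; try lia.
have j1 := acc_sw a c' k1. have j2 := acc_sw a c' k2.
rewrite /swB /= sw_id in j1; try lia. rewrite /swB /= sw_l in j2.
apply: (disj hB1 hB hC Cc Cc' _ j1 j2) => -[_ e]; lia.
Qed.

Lemma dir2 w : badw (l, d) C' w -> exists w', badw (l, d) C w'.
Proof.
move=> [hA hCw].
have [N1 hN1] : exists N, forall lb, finite_nat (fun e => C (lb, Some e)) ->
    forall e, C (lb, Some e) -> e < N.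
  apply: (fin_bound (Q := fun lb N => finite_nat (fun e => C (lb, Some e)) ->
    forall e, C (lb, Some e) -> e < N)).
    move=> t m n mn h hf e he; exact: leq_trans (h hf e he) mn.
  move=> lb; case: (classic (finite_nat (fun e => C (lb, Some e)))) => [[n hn]|hn].
    by exists n.
  by exists 0.
have [N2 hN2] : exists N, forall r x, d r = Some x -> x < N.
  apply: (fin_bound (Q := fun r N => forall x, d r = Some x -> x < N)).
    move=> t m n mn h x e; exact: leq_trans (h x e) mn.
  move=> r; case e: (d r) => [x|]; last by exists 0.
  by exists x.+1 => y [<-].
set M := foldr maxn 0 (a :: b :: vals w).
have hM : forall z, M < z -> z \notin vals w.
  move=> z hz; apply/negP => hin.
  have := in_fold (x := z) (s := a :: b :: vals w); rewrite !in_cons hin !orbT => /(_ isT).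
  rewrite -/M; lia.
have aM : a <= M by apply: in_fold; rewrite in_cons eqxx.
have bM : b <= M by apply: in_fold; rewrite !in_cons eqxx orbT.
set f := N1 + N2 + M.+1.
have fw : f \notin vals w by apply: hM; rewrite /f; lia.
have fd : forall r, d r <> Some f by move=> r e; have := hN2 _ _ e; rewrite /f; lia.
have fC : forall lb, finite_nat (fun e => C (lb, Some e)) -> ~ C (lb, Some f).
  by move=> lb hf hc; have := hN1 _ hf _ hc; rewrite /f; lia.
exists (swW b f w); split.
  apply: Apart_sw => //; exact: ind.2.1.
move=> [lb o] hs hacc; have := acc_sw b f hacc; rewrite swWK => {}hacc.
case: o hs hacc => [x|] hs hacc; last first.
  apply: (hCw (lb, None)) hacc; left; split => // -[l' [e _]]; discriminate.
case: (eqVneq x b) => [xb|xnb].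
  subst x; rewrite /swB /= sw_l in hacc.
  case: (classic (finite_nat (fun e => C (lb, Some e)))) => hfin.
    exact: (use2 hB1 hB hC ab (proj2 (ind.2.2 lb) hs) hs fw hacc).
  have [e [he Ce]] := nfin_big hfin M.+1.
  apply: (hCw (lb, Some e)); last by apply: acc_gen hacc => //; apply: hM; lia.
  left; split => // -[l' [ee _]]; case: ee => _ ee; lia.
case: (eqVneq x f) => [xf|xnf].
  subst x; rewrite /swB /= sw_r in hacc.
  have hinf : ~ finite_nat (fun e => C (lb, Some e)) by move=> hf; exact: fC hf hs.
  apply: (hCw (lb, Some b)) hacc.
  case: (classic (C (lb, Some b))) => hb.
    left; split; first done.
    move=> [l' [ee [_ hf]]]; case: ee => ee; subst l'; exact: hinf hf.
  by right; exists lb.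
rewrite /swB /= sw_id in hacc; try (apply/eqP; done).
apply: (hCw (lb, Some x)) hacc; left; split => // -[l' [ee _]]; case: ee => _ ee.
by move: xnb; rewrite ee eqxx.
Qed.
End Main2.

Theorem proposition6 (Sigma : finType) (A B : GRA Sigma)
  (hB1 : one_register B) (hB : unambiguous B)
  (l : locs A) (d : regs A -> option nat) (C : config B) (a b : nat) :
  ess_coverable C -> a <> b -> supp C a -> supp C b ->
  indist ((l, d), C) a b ->
  (reaches_bad ((l, d), C) <->
   reaches_bad ((l, d), (fun s => (C s /\ ~ Cplus C b s) \/ Cminus C b s) : config B)).
Proof.
move=> hC ab _ _ ind.
rewrite !rb_char; split; case=> w hw.
  exact: (dir1 hB1 hB hC ab ind hw).
exact: (dir2 hB1 hB hC ab ind hw).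
Qed.
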